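(* The metric space $(C^{lf}_\infty(\mathbb C),d_{\mathcal V})$ is path-connected.
   Context: $C^{lf}_\infty(\mathbb C)$ is the set of countably infinite locally finite subsets of $\mathbb C$ (i.e. meeting each compact set in finitely many points). $d_{\mathcal V}(A,B)=\sum_j 2^{-j}\frac{|\sum_{a\in A}\varphi_j(a)-\sum_{b\in B}\varphi_j(b)|}{1+|\sum_{a\in A}\varphi_j(a)-\sum_{b\in B}\varphi_j(b)|}$ for a fixed sequence $(\varphi_j)$ of compactly supported continuous real functions on $\mathbb C$ such that for each $m$ those supported in $\{|z|\le m\}$ are sup-norm dense among such functions supported in $\{|z|\le m\}$. *)

(* Defs.v *)
(* The complex plane C is modelled as R * R
   (product topology = Euclidean topology), R : realType. *)
From HB Require Import structures.
From mathcomp Require Import all_boot all_order all_algebra.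
From mathcomp Require Import all_classical all_reals all_analysis.
Set Implicit Arguments. Unset Strict Implicit. Unset Printing Implicit Defensive.
Import Order.TTheory GRing.Theory Num.Theory.
Import numFieldNormedType.Exports.
Local Open Scope classical_set_scope.
Local Open Scope ring_scope.

Definition cmod {R : realType} (z : R * R) : R := Num.sqrt (z.1 ^+ 2 + z.2 ^+ 2).

Definition locally_finite {R : realType} (A : set (R * R)) : Prop :=
  forall K : set (R * R), compact K -> finite_set (A `&` K).

Definition Clf_inf {R : realType} (A : set (R * R)) : Prop :=
  [/\ countable A, infinite_set A & locally_finite A].

Definition supported_in {R : realType} (m : R) (f : R * R -> R) : Prop :=
  forall z, m < cmod z -> f z = 0.

Definition admissible_seq {R : realType} (phi : nat -> R * R -> R) : Prop :=
  (forall j, continuous (phi j) /\ exists m : R, supported_in m (phi j)) /\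
  (forall m : nat, (0 < m)%N ->
     forall g : R * R -> R, continuous g -> supported_in m%:R g ->
     forall eps : R, 0 < eps ->
       exists j, supported_in m%:R (phi j) /\ forall z, `|g z - phi j z| < eps).

Definition set_sum {R : realType} (A : set (R * R)) (f : R * R -> R) : R :=
  \sum_(a \in A) f a.

(* the metric d_V; the paper's index j = 1,2,... corresponds to phi (j-1) *)
Definition dV {R : realType} (phi : nat -> R * R -> R) (A B : set (R * R)) : R :=
  limn (series (fun j : nat =>
     let D := set_sum A (phi j) - set_sum B (phi j) in
     (2 ^- j.+1) * (`|D| / (1 + `|D|)))).

Definition dV_path_connected {R : realType} (phi : nat -> R * R -> R) : Prop :=
  forall A B : set (R * R), Clf_inf A -> Clf_inf B ->
  exists gamma : R -> set (R * R),
    [/\ (forall t, 0 <= t <= 1 -> Clf_inf (gamma t)),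
        gamma 0 = A, gamma 1 = B &
        (forall t, 0 <= t <= 1 -> forall e : R, 0 < e ->
           exists2 delta : R, 0 < delta &
             forall s, 0 <= s <= 1 -> `|s - t| < delta ->
               dV phi (gamma s) (gamma t) < e)].

(* Main.v *)
Require Import Defs.
From HB Require Import structures.
From mathcomp Require Import all_boot all_order all_algebra.
From mathcomp Require Import all_classical all_reals all_analysis.
From mathcomp Require Import ring lra.
Set Implicit Arguments. Unset Strict Implicit. Unset Printing Implicit Defensive.
Import Order.TTheory GRing.Theory Num.Theory.
Import numFieldNormedType.Exports.
Local Open Scope classical_set_scope.
Local Open Scope ring_scope.

Definition cont (R : realType) (g : R -> R) := forall t e, 0 < e ->
  exists2 d, 0 < d & forall s, `|s - t| < d -> `|g s - g t| < e.

Lemma cont_comp (R : realType) (g p : R -> R) : cont g -> cont p -> cont (fun t => g (p t)).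
Proof.
move=> cg cp t e e0; have [d1 d10 H1] := cg (p t) e e0.
have [d2 d20 H2] := cp t d1 d10.
by exists d2 => // s st; apply: H1; apply: H2.
Qed.

Lemma cont_add (R : realType) (g h : R -> R) : cont g -> cont h -> cont (fun t => g t + h t).
Proof.
move=> cg ch t e e0.
have e2 : 0 < e / 2 by rewrite divr_gt0.
have [d1 d10 H1] := cg t _ e2; have [d2 d20 H2] := ch t _ e2.
exists (Num.min d1 d2); first by rewrite lt_min d10 d20.
move=> s; rewrite lt_min => /andP[s1 s2].
have := H1 s s1; have := H2 s s2.
have -> : g s + h s - (g t + h t) = (g s - g t) + (h s - h t) by ring.
move=> a b; apply: le_lt_trans (ler_normD _ _) _; lra.
Qed.

Lemma cont_cst (R : realType) (a : R) : cont (fun=> a).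
Proof. by move=> t e e0; exists 1 => // s _; rewrite subrr normr0. Qed.

Lemma cont_sum_seq (R : realType) (I : eqType) (r : seq I) (G : I -> R -> R) :
  (forall i, i \in r -> cont (G i)) -> cont (fun t => \sum_(i <- r) G i t).
Proof.
elim: r => [|i r IH] H.
  by under eq_fun do rewrite big_nil; exact: cont_cst.
under eq_fun do rewrite big_cons.
apply: cont_add; first by apply: H; rewrite mem_head.
by apply: IH => j jr; apply: H; rewrite in_cons jr orbT.
Qed.

Lemma cont_fsum (R : realType) (I : choiceType) (L : set I) (G : I -> R -> R) :
  (forall i, L i -> cont (G i)) ->
  (forall t0, exists2 eta, 0 < eta & exists F : set I, [/\ finite_set F, F `<=` L &
     forall t, `|t - t0| < eta -> forall i, L i -> ~ F i -> G i t = 0]) ->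
  cont (fun t => \sum_(i \in L) G i t).
Proof.
move=> cG lf t0 e e0.
have [eta eta0 [F [Ffin FL HF]]] := lf t0.
have eqs t : `|t - t0| < eta -> \sum_(i \in L) G i t = \sum_(i <- finmap.enum_fset (fset_set F)) G i t.
  move=> tt0; rewrite -(fsbig_widen F L) //; first by rewrite fsbig_finite.
  by move=> i [Li nFi]; apply: HF.
have cF : cont (fun t => \sum_(i <- finmap.enum_fset (fset_set F)) G i t).
  by apply: cont_sum_seq => i; rewrite in_fset_set // inE => /FL; exact: cG.
have [d d0 Hd] := cF t0 e e0.
exists (Num.min d eta); first by rewrite lt_min d0 eta0.
move=> s; rewrite lt_min => /andP[sd se].
rewrite eqs // eqs; last by rewrite subrr normr0.
exact: Hd.
Qed.
Definition Hm (R : realType) (c x : R * R) (u : R) : R * R :=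
  (c.1 + (x.1 - c.1) / u, c.2 + (x.2 - c.2) / u).

Lemma Hm_cont (R : realType) (f : R * R -> R) c x (t0 : R) : continuous f -> t0 != 0 ->
  {for t0, continuous (fun u => f (Hm c x u))}.
Proof.
move=> cf t0n.
have h : {for t0, continuous (Hm c x)}.
  rewrite /Hm /continuous_at /=.
  apply: (@cvg_pair _ _ _ _ (nbhs (c.1 + (x.1 - c.1) / t0)) (nbhs (c.2 + (x.2 - c.2) / t0))).
  apply: cvgD; first exact: cvg_cst.
  apply: cvgM; first exact: cvg_cst.
  by apply: cvgV => //; exact: cvg_id.
  apply: cvgD; first exact: cvg_cst.
  apply: cvgM; first exact: cvg_cst.
  by apply: cvgV => //; exact: cvg_id.
exact: (continuous_comp h (cf _)).
Qed.

Lemma cont_at_ed (R : realType) (g : R -> R) t : {for t, continuous g} ->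
  forall e, 0 < e -> exists2 d, 0 < d & forall s, `|s - t| < d -> `|g s - g t| < e.
Proof.
move=> /cvgr_dist_lt H e e0; have := H e e0.
case/nbhs_ballP => d /= d0 Hd; exists d => // s st.
rewrite distrC; apply: Hd; rewrite /ball /= distrC; exact: st.
Qed.

Lemma cmod_ge (R : realType) (z : R * R) : `|z.1| <= cmod z /\ `|z.2| <= cmod z.
Proof.
rewrite /cmod; split; rewrite -sqrtr_sqr ler_sqrt ?lerDl ?lerDr ?sqr_ge0 //;
  by apply: addr_ge0; apply: sqr_ge0.
Qed.

Lemma supp_box (R : realType) (f : R * R -> R) m z : supported_in m f -> f z != 0 ->
  `|z.1| <= m /\ `|z.2| <= m.
Proof.
move=> sf fz; have [h1 h2] := cmod_ge z.
case: (leP (cmod z) m) => hz; last by rewrite sf // eqxx in fz.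
split; exact: le_trans hz.
Qed.

Definition gfun (R : realType) (f : R * R -> R) (c x : R * R) (u : R) : R :=
  if 0 < u then f (Hm c x u) else 0.

Lemma far_comp (R : realType) (m ci a s : R) : a != 0 -> 0 < s ->
  s < `|a| / (`|m| + `|ci| + 1) -> m < `|ci + a / s|.
Proof.
move=> a0 s0 hs.
have K0 : 0 < `|m| + `|ci| + 1 by have := normr_ge0 m; have := normr_ge0 ci; lra.
have h1 : `|m| + `|ci| + 1 < `|a| / s.
  rewrite ltr_pdivlMr // mulrC -ltr_pdivlMr //.
have h2 : `|a / s| = `|a| / s by rewrite normrM normfV (gtr0_norm s0).
have h3 : `|a / s| - `|ci| <= `|ci + a / s|.
  by rewrite [ci + _]addrC; apply: lerB_normD.
have := ler_norm m; lra.
Qed.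

Lemma near0_gfun (R : realType) (f : R * R -> R) c x m : supported_in m f -> x != c ->
  exists2 d, 0 < d & forall s, 0 < s -> s < d -> f (Hm c x s) = 0.
Proof.
move=> sf xc.
have [a1|a2] : x.1 - c.1 != 0 \/ x.2 - c.2 != 0.
    case: x c xc => [x1 x2] [c1 c2] /=; rewrite !subr_eq0.
    by case: (eqVneq x1 c1) => [->|]; case: (eqVneq x2 c2) => [->|]; auto; rewrite eqxx.
  have K0 : 0 < `|m| + `|c.1| + 1 by have := normr_ge0 m; have := normr_ge0 c.1; lra.
  exists (`|x.1 - c.1| / (`|m| + `|c.1| + 1)); first by rewrite divr_gt0 // normr_gt0.
  move=> s s0 sd; case: (eqVneq (f (Hm c x s)) 0) => // /(supp_box sf) [h1 _].
  by have := far_comp a1 s0 sd; rewrite /Hm /= in h1; lra.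
have K0 : 0 < `|m| + `|c.2| + 1 by have := normr_ge0 m; have := normr_ge0 c.2; lra.
exists (`|x.2 - c.2| / (`|m| + `|c.2| + 1)); first by rewrite divr_gt0 // normr_gt0.
move=> s s0 sd; case: (eqVneq (f (Hm c x s)) 0) => // /(supp_box sf) [_ h1].
by have := far_comp a2 s0 sd; rewrite /Hm /= in h1; lra.
Qed.

Lemma cont_gfun (R : realType) (f : R * R -> R) c x m : continuous f -> supported_in m f ->
  x != c -> cont (gfun f c x).
Proof.
move=> cf sf xc t0 e e0.
case: (ltrgtP t0 0) => ht.
- exists (- t0); first by rewrite oppr_gt0.
  move=> s hs; have s0 : s < 0 by have := ler_norm (s - t0); lra.
  rewrite /gfun; case: ifP => h1; first by lra.
  case: ifP => h2; first by lra.
  by rewrite subrr normr0.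
- have [d d0 Hd] := cont_at_ed (@Hm_cont _ f c x t0 cf (lt0r_neq0 ht)) e0.
  exists (Num.min d t0); first by rewrite lt_min d0 ht.
  move=> s; rewrite lt_min => /andP[sd st].
  have s0 : 0 < s by have := ler_norm (t0 - s); rewrite distrC in st; lra.
  by rewrite /gfun s0 ht; apply: Hd.
- have [d d0 Hd] := near0_gfun sf xc.
  exists d => // s; rewrite ht subr0 => sd.
  rewrite /gfun ltxx; case: ifP => s0; last by rewrite subrr normr0.
  rewrite Hd //; first by rewrite subrr normr0.
  by have := ler_norm s; lra.
Qed.

Definition par (R : realType) (k : nat) (t : R) : R :=
  if k == 0%N then 1 - 2 * t else if k == 1%N then 1 - `|2 * t - 1| else 2 * t - 1.

Lemma par_lip (R : realType) k (s t : R) : `|par k s - par k t| <= 2 * `|s - t|.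
Proof.
rewrite /par; case: ifP => _.
  have -> : 1 - 2 * s - (1 - 2 * t) = 2 * (t - s) by ring.
  by rewrite normrM ger0_norm // distrC.
case: ifP => _.
  have -> : 1 - `|2 * s - 1| - (1 - `|2 * t - 1|) = `|2 * t - 1| - `|2 * s - 1| by ring.
  apply: le_trans (ler_dist_dist _ _) _.
  have -> : 2 * t - 1 - (2 * s - 1) = 2 * (t - s) by ring.
  by rewrite normrM ger0_norm // distrC.
have -> : 2 * s - 1 - (2 * t - 1) = 2 * (s - t) by ring.
by rewrite normrM ger0_norm.
Qed.

Lemma par_bnd (R : realType) k (t : R) : `|par k t| <= 1 + 2 * `|t|.
Proof.
have h1 := ler_norm t; have h2 := ler_norm (- t); rewrite normrN in h2.
have h0 := normr_ge0 t.
rewrite /par; case: ifP => _.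
  by rewrite ler_norml; apply/andP; split; lra.
case: ifP => _.
  have h3 := ler_norm (2 * t - 1); have h4 := ler_norm (- (2 * t - 1)).
  rewrite normrN in h4; have h5 := normr_ge0 (2 * t - 1).
  have h6 : `|2 * t - 1| <= 2 * `|t| + 1.
    apply: le_trans (ler_normD _ _) _; rewrite normrM normrN normr1 ger0_norm //.
  by rewrite ler_norml; apply/andP; split; lra.
by rewrite ler_norml; apply/andP; split; lra.
Qed.

Lemma cont_par (R : realType) k : cont (@par R k).
Proof.
move=> t e e0; exists (e / 2); first by rewrite divr_gt0.
move=> s st; apply: le_lt_trans (par_lip k s t) _; lra.
Qed.

Definition Zs (R : realType) (c : R * R) (y : R) : set (R * R) :=
  [set z | exists n : nat, z = (c.1 + n.+1%:R, c.2 + n.+1%:R * y)].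

Definition Xk (R : realType) (A Z B : set (R * R)) (k : nat) : set (R * R) :=
  if k == 0%N then A else if k == 1%N then Z else B.

Definition Lab (R : realType) (A Z B : set (R * R)) : set ((R * R) * nat) :=
  [set l | (l.2 <= 2)%N /\ Xk A Z B l.2 l.1].

Definition Pos (R : realType) (A Z B : set (R * R)) (t : R) : set ((R * R) * nat) :=
  [set l | Lab A Z B l /\ 0 < par l.2 t].

Definition gam (R : realType) (c : R * R) (A Z B : set (R * R)) (t : R) : set (R * R) :=
  (fun l => Hm c l.1 (par l.2 t)) @` Pos A Z B t.

Definition Good (R : realType) (c : R * R) (y : R) (A : set (R * R)) : Prop :=
  forall a, A a -> a.1 != c.1 /\ (c.1 < a.1 -> a.2 - c.2 != y * (a.1 - c.1)).

Lemma Hm1 (R : realType) (c x : R * R) : Hm c x 1 = x.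
Proof. by case: x c => [x1 x2] [c1 c2]; rewrite /Hm /= !divr1; congr (_, _); ring. Qed.

Lemma gam0 (R : realType) c (A Z B : set (R * R)) : gam c A Z B 0 = A.
Proof.
apply/seteqP; split.
  move=> _ [[x k] [[k2 Xx] pk] <-] /=.
  move: k2 Xx pk; rewrite /par /Xk /=.
  case: k => [|[|k]] //= _ Ax pk; first by rewrite mulr0 subr0 Hm1.
    by move: pk; rewrite mulr0 add0r normrN normr1 subrr ltxx.
  by move: pk; rewrite mulr0 add0r ltr0N1.
move=> a Aa; exists (a, 0%N); last by rewrite /= /par /= mulr0 subr0 Hm1.
by split; [split|rewrite /par /= mulr0 subr0 ltr01].
Qed.

Lemma gam1 (R : realType) c (A Z B : set (R * R)) : gam c A Z B 1 = B.
Proof.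
have e2 : (2 : R) * 1 - 1 = 1 by rewrite mulr1 -addrA subrr addr0.
apply/seteqP; split.
  move=> _ [[x k] [[k2 Xx] pk] <-] /=.
  move: k2 Xx pk; rewrite /par /Xk /=.
  case: k => [|[|k]] //= k2 Bx pk; first by move: pk; rewrite mulr1; lra.
    by move: pk; rewrite e2 normr1 subrr ltxx.
  by rewrite e2 Hm1.
move=> a Ba; exists (a, 2%N); last by rewrite /= /par /= e2 Hm1.
by split; [split|rewrite /par /= e2 ltr01].
Qed.

Lemma Hm_inj (R : realType) (p : R) c x x' : p != 0 -> Hm c x p = Hm c x' p -> x = x'.
Proof.
move=> p0; case: x x' c => [x1 x2] [y1 y2] [c1 c2]; rewrite /Hm /= => -[h1 h2].
have pi : p^-1 != 0 by rewrite invr_eq0.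
move/addrI/(mulIf pi)/addIr: h1 => ->.
by move/addrI/(mulIf pi)/addIr: h2 => ->.
Qed.

Lemma inf_img (R : realType) (p : R) c (A : set (R * R)) : infinite_set A -> p != 0 ->
  infinite_set ((fun x => Hm c x p) @` A).
Proof.
move=> iA p0; rewrite (eq_finite_set (inj_card_eq _)) //.
by move=> x x' _ _; apply: Hm_inj.
Qed.

Definition Bx (R : realType) (c : R * R) (r : R) : set (R * R) :=
  [set x | `|x.1 - c.1| <= r /\ `|x.2 - c.2| <= r].

Lemma Bx_compact (R : realType) (c : R * R) r : compact (Bx c r).
Proof.
have -> : Bx c r = `[c.1 - r, c.1 + r] `*` `[c.2 - r, c.2 + r].
  by apply/seteqP; split => x /=; rewrite !in_itv /= -!ler_distl.
by apply: compact_setX; apply: segment_compact.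
Qed.

Lemma lf_box (R : realType) (A : set (R * R)) c r : locally_finite A -> finite_set (A `&` Bx c r).
Proof. by move=> lA; apply: lA; apply: Bx_compact. Qed.

Lemma Zbox (R : realType) (c : R * R) y r : finite_set (Zs c y `&` Bx c r).
Proof.
apply: (sub_finite_set (B := (fun n : nat => (c.1 + n.+1%:R, c.2 + n.+1%:R * y)) @` `I_(Num.Def.trunc r))).
  move=> _ [[n ->] [h1 _]]; exists n => //; move: h1 => /=.
  rewrite addrC addKr normr_nat => h.
  have h2 := truncnS_gt r.
  have : (n.+1%:R : R) < (Num.Def.trunc r).+1%:R by apply: le_lt_trans h h2.
  by rewrite ltr_nat.
by apply: finite_image; apply: finite_II.
Qed.

Lemma Zinf (R : realType) (c : R * R) y : infinite_set (Zs c y).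
Proof.
have -> : Zs c y = (fun n : nat => (c.1 + n.+1%:R, c.2 + n.+1%:R * y)) @` [set: nat].
  by apply/seteqP; split => z [n]; [move=> ->; exists n|move=> _ <-; exists n].
rewrite (eq_finite_set (inj_card_eq _)); first exact: infinite_nat.
move=> m n _ _ [] /addrI /eqP; rewrite eqr_nat eqSS => /eqP //.
Qed.

Lemma Zc (R : realType) (c : R * R) y : countable (Zs c y).
Proof.
have -> : Zs c y = (fun n : nat => (c.1 + n.+1%:R, c.2 + n.+1%:R * y)) @` [set: nat].
  by apply/seteqP; split => z [n]; [move=> ->; exists n|move=> _ <-; exists n].
apply: sub_countable (card_image_le _ _) _; exact: countableP.
Qed.

Lemma Labbox (R : realType) (A Z B : set (R * R)) c r :
  finite_set (A `&` Bx c r) -> finite_set (Z `&` Bx c r) -> finite_set (B `&` Bx c r) ->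
  finite_set [set l | Lab A Z B l /\ Bx c r l.1].
Proof.
move=> fA fZ fB.
apply: (sub_finite_set (B := ((fun x => (x, 0%N)) @` (A `&` Bx c r)) `|`
   ((fun x => (x, 1%N)) @` (Z `&` Bx c r)) `|` ((fun x => (x, 2%N)) @` (B `&` Bx c r)))).
  move=> [x k] [[/= k2 Xx] bx]; move: k2 Xx; rewrite /Xk.
  case: k => [|[|[|k]]] //= _ Xx.
  - by left; left; exists x.
  - by left; right; exists x.
  - by right; exists x.
by rewrite !finite_setU; split; [split|]; apply: finite_image.
Qed.

Lemma Labc (R : realType) (A Z B : set (R * R)) :
  countable A -> countable Z -> countable B -> countable (Lab A Z B).
Proof.
move=> cA cZ cB.
apply: (sub_countable (B := \bigcup_(k in [set: nat]) ((fun x => (x, k)) @` Xk A Z B k))).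
  by apply: subset_card_le => -[x k] [_ Xx]; exists k => //; exists x.
apply: bigcup_countable; first exact: countableP.
move=> k _; apply: sub_countable (card_image_le _ _) _.
by rewrite /Xk; case: ifP => _ //; case: ifP.
Qed.

Lemma compact_box (R : realType) (K : set (R * R)) : compact K ->
  exists M : R, forall z, K z -> `|z.1| <= M /\ `|z.2| <= M.
Proof.
move=> /compact_bounded [M0 [_ HM]].
exists (M0 + 1) => z Kz.
have := HM (M0 + 1) (eq_ind_r is_true ltr01 (ltrDl M0 1)) z Kz.

rewrite /= prod_normE ge_max => /andP[h1 h2]; by split.
Qed.

Lemma Hm_back (R : realType) (c x : R * R) p : p != 0 ->
  x.1 - c.1 = p * ((Hm c x p).1 - c.1) /\ x.2 - c.2 = p * ((Hm c x p).2 - c.2).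
Proof. by move=> p0; rewrite /Hm /=; split; field. Qed.

Lemma Hm_bound (R : realType) (c x : R * R) p P M : 0 < p -> p <= P ->
  `|(Hm c x p).1| <= M -> `|(Hm c x p).2| <= M ->
  Bx c (P * (M + `|c.1| + `|c.2|)) x.
Proof.
move=> p0 pP h1 h2; have [e1 e2] := Hm_back c x (lt0r_neq0 p0).
have n1 : `|x.1 - c.1| = p * `|(Hm c x p).1 - c.1| by rewrite e1 normrM gtr0_norm.
have n2 : `|x.2 - c.2| = p * `|(Hm c x p).2 - c.2| by rewrite e2 normrM gtr0_norm.
have a1 := ler_normB (Hm c x p).1 c.1; have a2 := ler_normB (Hm c x p).2 c.2.
have b1 := normr_ge0 ((Hm c x p).1 - c.1); have b2 := normr_ge0 ((Hm c x p).2 - c.2).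
have d1 := normr_ge0 c.1; have d2 := normr_ge0 c.2.
rewrite /Bx /= n1 n2; split; nra.
Qed.

Lemma Zpt (R : realType) (c : R * R) y z : Zs c y z ->
  exists2 N : R, 0 < N & z = (c.1 + N, c.2 + N * y).
Proof. by move=> [n ->]; exists n.+1%:R => //; rewrite ltr0n. Qed.

Lemma cross (R : realType) (c : R * R) y (A : set (R * R)) x z p q :
  Good c y A -> A x -> Zs c y z -> 0 < p -> 0 < q -> Hm c x p = Hm c z q -> False.
Proof.
move=> gA Ax /Zpt [N N0 ->] p0 q0; rewrite /Hm /= => -[h1 h2].
have {}h1 : (x.1 - c.1) / p = N / q.
  by move/addrI: h1 => ->; congr (_ / _); ring.
have {}h2 : (x.2 - c.2) / p = N * y / q.
  by move/addrI: h2 => ->; congr (_ / _); ring.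
have e1 : x.1 - c.1 = N / q * p by rewrite -h1 divfK // lt0r_neq0.
have e2 : x.2 - c.2 = N * y / q * p by rewrite -h2 divfK // lt0r_neq0.
have [_ g2] := gA x Ax.
have lt : c.1 < x.1.
  rewrite -subr_gt0 e1; apply: mulr_gt0 => //; exact: divr_gt0.
by move: (g2 lt); rewrite e2 e1 => /eqP; apply; ring.
Qed.

Lemma gam_inj (R : realType) (c : R * R) y (A B : set (R * R)) t :
  Good c y A -> Good c y B ->
  set_inj (Pos A (Zs c y) B t) (fun l => Hm c l.1 (par l.2 t)).
Proof.
move=> gA gB [x k] [x' k']; rewrite !inE => -[[/= k2 Xx] pk] [[/= k2' Xx'] pk'] /= E.
have same : k = k' -> (x, k) = (x', k').
  by move=> ekk; move: E; rewrite -ekk => /(Hm_inj (lt0r_neq0 pk)) ->.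
move: k2 k2' Xx Xx' pk pk' E same; rewrite /Xk /par.
case: k => [|[|[|k]]] //; case: k' => [|[|[|k']]] //= _ _ Xx Xx' pk pk' E same;
  try (by apply: same); try (by exfalso; lra).
- by exfalso; apply: (cross gA Xx Xx' pk pk' E).
- by exfalso; apply: (cross gA Xx' Xx pk' pk (esym E)).
- by exfalso; apply: (cross gB Xx' Xx pk' pk (esym E)).
- by exfalso; apply: (cross gB Xx Xx' pk pk' E).
Qed.

Lemma sum_gam (R : realType) (f : R * R -> R) (c : R * R) y (A B : set (R * R)) t :
  Good c y A -> Good c y B ->
  set_sum (gam c A (Zs c y) B t) f =
  \sum_(l \in Lab A (Zs c y) B) gfun f c l.1 (par l.2 t).
Proof.
move=> gA gB; rewrite /set_sum /gam fsbig_image; last exact: gam_inj.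
rewrite (eq_fsbigr (fun l => gfun f c l.1 (par l.2 t))); last first.
  by move=> l; rewrite inE => -[_ pl]; rewrite /gfun pl.
apply: fsbig_widen; first by move=> l [].
move=> l [Ll nP]; rewrite /gfun /=; case: ifP => // pl.
by exfalso; apply: nP.
Qed.

Lemma Clf_gam (R : realType) (c : R * R) y (A B : set (R * R)) t :
  Clf_inf A -> Clf_inf B -> Good c y A -> Good c y B -> 0 <= t <= 1 ->
  Clf_inf (gam c A (Zs c y) B t).
Proof.
move=> [cA iA lA] [cB iB lB] gA gB /andP[t0 t1]; split.
- apply: sub_countable (card_image_le _ _) _.
  apply: (sub_countable (B := Lab A (Zs c y) B)); first by apply: subset_card_le => l [].
  exact: Labc cA (@Zc _ c y) cB.
- case: (ltrgtP t (1/2)) => ht.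
  + have p0 : 0 < par 0 t by rewrite /par /=; lra.
    apply: (@sub_infinite_set _ ((fun x => Hm c x (par 0 t)) @` A)); last first.
      exact: (@inf_img _ _ c _ iA (lt0r_neq0 p0)).
    by move=> _ [x Ax <-]; exists (x, 0%N).
  + have p0 : 0 < par 2 t by rewrite /par /=; lra.
    apply: (@sub_infinite_set _ ((fun x => Hm c x (par 2 t)) @` B)); last first.
      exact: (@inf_img _ _ c _ iB (lt0r_neq0 p0)).
    by move=> _ [x Bx <-]; exists (x, 2%N).
  + have p0 : 0 < par 1 t.
      rewrite /par /= ht; have -> : 2 * (1 / 2) - 1 = 0 :> R by field.
      by rewrite normr0 subr0 ltr01.
    apply: (@sub_infinite_set _ ((fun x => Hm c x (par 1 t)) @` (Zs c y))); last first.
      exact: (@inf_img _ _ c _ (@Zinf _ c y) (lt0r_neq0 p0)).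
    by move=> _ [x Zx <-]; exists (x, 1%N).
- move=> K cK; have [M HM] := compact_box cK.
  apply: (sub_finite_set (B := (fun l => Hm c l.1 (par l.2 t)) @`
     [set l | Lab A (Zs c y) B l /\ Bx c (3 * (M + `|c.1| + `|c.2|)) l.1])).
    move=> _ [[l Pl <-] Kz]; exists l => //; split; first by case: Pl.
    have [h1 h2] := HM _ Kz; case: Pl => _ pl.
    apply: (Hm_bound pl _ h1 h2).
    have := par_bnd l.2 t; have := ler_norm (par l.2 t); rewrite (ger0_norm t0); lra.
  apply: finite_image; apply: Labbox; [exact: lf_box | exact: Zbox | exact: lf_box].
Qed.

Lemma exists_notin (R : realType) (S : set R) : countable S -> exists x, ~ S x.
Proof.
move=> cS; apply: contrapT => H.
have ST : S = setT by apply/seteqP; split => // x _; apply: contrapT => Sx; apply: H; exists x.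
have := countable_lebesgue_measure0 cS.
rewrite ST -(set_itvNyy) lebesgue_measure_itv /=.
by [].
Qed.

Lemma countableU (T : Type) (A B : set T) : countable A -> countable B -> countable (A `|` B).
Proof.
move=> cA cB.
have -> : A `|` B = \bigcup_(i in [set: bool]) (if i then A else B).
  apply/seteqP; split => x.
    by case=> h; [exists true|exists false].
  by case=> -[] _ h; [left|right].
apply: bigcup_countable; first exact: countableP.
by case.
Qed.

Lemma choose_cy (R : realType) (A B : set (R * R)) : countable A -> countable B ->
  exists c y, Good c y A /\ Good c y B.
Proof.
move=> cA cB; have cAB := countableU cA cB.
have [c1 hc1] := exists_notin (sub_countable (card_image_le fst (A `|` B)) cAB).
pose c := (c1, 0 : R).
have [y hy] := exists_notin
  (sub_countable (card_image_le (fun a : R * R => (a.2 - c.2) / (a.1 - c.1)) (A `|` B)) cAB).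
have G (a : R * R) : (A `|` B) a -> a.1 != c.1 /\ (c.1 < a.1 -> a.2 - c.2 != y * (a.1 - c.1)).
  move=> ABa; split.
    by apply/eqP => e; apply: hc1; exists a.
  move=> lt; apply/eqP => e; apply: hy; exists a => //.
  rewrite e mulfK //; by rewrite subr_eq0 gt_eqF.
by exists c, y; split => a h; apply: G; [left|right].
Qed.
Lemma geo_sum (R : realType) n :
  \sum_(0 <= j < n) (2 ^- j.+1 : R) = 1 - 2 ^- n.
Proof.
elim: n => [|n IH]; first by rewrite big_geq // expr0 invr1 subrr.
rewrite big_nat_recr //= IH.
have h2 : (2 : R) ^+ n != 0 by rewrite expf_neq0.
rewrite exprS invfM; field; exact: h2.
Qed.

Lemma geo_sum2 (R : realType) N n : (N <= n)%N ->
  \sum_(N <= j < n) (2 ^- j.+1 : R) <= 2 ^- N.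
Proof.
move=> Nn; have := geo_sum R n; rewrite (big_cat_nat (leq0n N) Nn) /= geo_sum.
move=> h; have : \sum_(N <= j < n) (2 ^- j.+1 : R) = 2 ^- N - 2 ^- n by lra.
move=> ->; rewrite lerBlDr lerDl invr_ge0; exact: exprn_ge0.
Qed.

Lemma frac_le (R : realType) (x : R) : 0 <= x -> x / (1 + x) <= x /\ x / (1 + x) <= 1 /\ 0 <= x / (1 + x).
Proof.
move=> x0; have h : 0 < 1 + x by lra.
split; last split.
- rewrite ler_pdivrMr //; nra.
- rewrite ler_pdivrMr //; lra.
- by apply: divr_ge0 => //; lra.
Qed.

Lemma dV_small (R : realType) (phi : nat -> R * R -> R) X Y N (eta : R) :
  0 <= eta ->
  (forall j, (j < N)%N -> `|set_sum X (phi j) - set_sum Y (phi j)| <= eta) ->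
  dV phi X Y <= N%:R * eta + 2 ^- N.
Proof.
move=> eta0 HD; rewrite /dV.
set u := (fun j : nat => _).
have u0 j : 0 <= u j.
  rewrite /u /=; apply: mulr_ge0; first by rewrite invr_ge0 exprn_ge0.
  by have [_ [_ ]] := frac_le (normr_ge0 (set_sum X (phi j) - set_sum Y (phi j))).
have u1 j : u j <= 2 ^- j.+1.
  rewrite /u /=; rewrite -[X in _ <= X]mulr1; apply: ler_wpM2l; first by rewrite invr_ge0 exprn_ge0.
  by have [_ [+ _]] := frac_le (normr_ge0 (set_sum X (phi j) - set_sum Y (phi j))).
have u2 j : (j < N)%N -> u j <= eta.
  move=> jN; rewrite /u /=.
  have [h _] := frac_le (normr_ge0 (set_sum X (phi j) - set_sum Y (phi j))).
  apply: le_trans (HD j jN).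
  apply: le_trans h.
  rewrite -[X in _ <= X]mul1r; apply: ler_wpM2r.
    by have [_ [_ ]] := frac_le (normr_ge0 (set_sum X (phi j) - set_sum Y (phi j))).
  by rewrite invf_le1 ?exprn_gt0 // exprn_ege1 // ler1n.
have nd : nondecreasing_seq (series u).
  by apply/nondecreasing_seqP => n; rewrite /series /= big_nat_recr //= lerDl.
have bd n : series u n <= N%:R * eta + 2 ^- N.
  have -> : series u n = \sum_(0 <= j < n) u j by [].
  case: (leqP N n) => Nn.
    rewrite (big_cat_nat (leq0n N) Nn) /=; apply: lerD.
      apply: (@le_trans _ _ (\sum_(0 <= j < N) eta)).
        by apply: ler_sum_nat => j /andP[_ jN]; apply: u2.
      by rewrite sumr_const_nat subn0 mulr_natl.
    apply: (@le_trans _ _ (\sum_(N <= j < n) (2 ^- j.+1 : R))); last exact: geo_sum2.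
    by apply: ler_sum_nat => j _; apply: u1.
  apply: (@le_trans _ _ (\sum_(0 <= j < n) eta)).
    by apply: ler_sum_nat => j /andP[_ jn]; apply: u2; apply: ltn_trans Nn.
  rewrite sumr_const_nat subn0 -mulr_natl.
  have h1 : n%:R * eta <= N%:R * eta by apply: ler_wpM2r => //; rewrite ler_nat ltnW.
  have h2 : 0 <= (2:R) ^- N by rewrite invr_ge0 exprn_ge0.
  lra.
have cv : cvgn (series u).
  apply: nondecreasing_is_cvgn => //; exists (N%:R * eta + 2 ^- N) => _ [n _ <-]; exact: bd.
apply: limr_le => //; exact: nearW.
Qed.

Lemma Lab_neq (R : realType) (c : R * R) y (A B : set (R * R)) l :
  Good c y A -> Good c y B -> Lab A (Zs c y) B l -> l.1 != c.
Proof.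
move=> gA gB; case: l => x k [/= k2 Xx]; move: k2 Xx; rewrite /Xk.
have neq1 : x.1 != c.1 -> x != c by apply: contra => /eqP ->.
case: k => [|[|[|k]]] //= _ Xx.
- by apply: neq1; case: (gA x Xx).
- apply: neq1; have [N N0 ->] := Zpt Xx; rewrite /= -subr_eq0 addrAC subrr add0r.
  exact: lt0r_neq0.
- by apply: neq1; case: (gB x Xx).
Qed.

Lemma cont_S (R : realType) (f : R * R -> R) m (c : R * R) y (A B : set (R * R)) :
  continuous f -> supported_in m f -> Clf_inf A -> Clf_inf B -> Good c y A -> Good c y B ->
  cont (fun t => set_sum (gam c A (Zs c y) B t) f).
Proof.
move=> cf sf [cA iA lA] [cB iB lB] gA gB.
have -> : (fun t => set_sum (gam c A (Zs c y) B t) f) =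
    (fun t => \sum_(l \in Lab A (Zs c y) B) gfun f c l.1 (par l.2 t)).
  by apply: funext => t; exact: sum_gam.
apply: cont_fsum.
  move=> l Ll; apply: (cont_comp (cont_gfun cf sf (Lab_neq gA gB Ll))).
  exact: cont_par.
move=> t0; exists 1 => //.
exists [set l | Lab A (Zs c y) B l /\ Bx c ((3 + 2 * `|t0|) * (`|m| + `|c.1| + `|c.2|)) l.1].
split.
- by apply: Labbox; [exact: lf_box | exact: Zbox | exact: lf_box].
- by move=> l [].
move=> t tt0 l Ll nF; rewrite /gfun; case: ifP => // pl.
case: (eqVneq (f (Hm c l.1 (par l.2 t))) 0) => // /(supp_box sf) [h1 h2].
exfalso; apply: nF; split => //.
have hm := ler_norm m.
apply: (Hm_bound pl _ (le_trans h1 hm) (le_trans h2 hm)).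
have := par_bnd l.2 t; have := ler_norm (par l.2 t).
have : `|t| <= `|t0| + `|t - t0|.
  by have := ler_normD t0 (t - t0); rewrite addrC subrK addrC.
lra.
Qed.

Lemma cont_fin (R : realType) (S : nat -> R -> R) N : (forall j, cont (S j)) ->
  forall t eta, 0 < eta -> exists2 d, 0 < d &
    forall s, `|s - t| < d -> forall j, (j < N)%N -> `|S j s - S j t| < eta.
Proof.
move=> cS t eta eta0; elim: N => [|N [d1 d10 H1]].
  by exists 1 => // s _ j; rewrite ltn0.
have [d2 d20 H2] := cS N t eta eta0.
exists (Num.min d1 d2); first by rewrite lt_min d10 d20.
move=> s; rewrite lt_min => /andP[s1 s2] j; rewrite ltnS leq_eqVlt => /orP[/eqP ->|jN].
  exact: H2.
exact: H1.
Qed.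

Theorem mainTheorem7 (R : realType) (phi : nat -> R * R -> R) :
  admissible_seq phi -> dV_path_connected phi.
Proof.
move=> [hphi _] A B hA hB.
have [cA _ _] := hA; have [cB _ _] := hB.
have [c [y [gA gB]]] := choose_cy cA cB.
exists (gam c A (Zs c y) B); split.
- by move=> t ht; apply: Clf_gam.
- exact: gam0.
- exact: gam1.
move=> t _ e e0.
pose N := (Num.Def.trunc (2 / e)).+1.
have hN : 2 / e < N%:R by apply: truncnS_gt.
have P0 : (0 : R) < 2 ^+ N by apply: exprn_gt0.
have hP : (N%:R : R) < 2 ^+ N by rewrite -natrX ltr_nat ltn_expl.
pose q : R := 2 ^- N.
have q0 : 0 < q by rewrite /q invr_gt0.
have qP : q * 2 ^+ N = 1 by rewrite /q mulVf // lt0r_neq0.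
have Ne : 2 < N%:R * e by rewrite -ltr_pdivrMr.
have hq1 : 0 < q * (2 ^+ N - N%:R) by apply: mulr_gt0 => //; rewrite subr_gt0.
have hq1' : q * N%:R < 1 by lra.
have hq2 : 0 < q * (N%:R * e - 2) by apply: mulr_gt0 => //; rewrite subr_gt0.
have hq3 : 0 < (1 - q * N%:R) * e by apply: mulr_gt0 => //; rewrite subr_gt0.
have hqe : q < e / 2 by nra.
pose eta := e / (4 * (N%:R + 1)).
have Npos : (0 : R) < 4 * (N%:R + 1) by apply: mulr_gt0 => //; rewrite ltr_pwDr // ler0n.
have eta0 : 0 < eta by rewrite divr_gt0.
have heta : eta * (4 * (N%:R + 1)) = e by rewrite /eta divfK // lt0r_neq0.
have cS j : cont (fun t => set_sum (gam c A (Zs c y) B t) (phi j)).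
  have [cfj [m sm]] := hphi j.
  exact: (cont_S cfj sm hA hB gA gB).
have [d d0 Hd] := cont_fin N cS t eta0.
exists d => // s _ st.
have hdv := @dV_small R phi (gam c A (Zs c y) B s) (gam c A (Zs c y) B t) N eta (ltW eta0).
have {hdv} := hdv (fun j jN => ltW (Hd s st j jN)).
have Nge : (0 : R) <= N%:R by rewrite ler0n.
rewrite -/q => hdv; nra.
Qed.
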